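(* Let $U$ be a finite nonempty set, $R$ an equivalence relation on $U$, and $M(R)$ the support matroid induced by $R$. For every $X\subseteq U$, $X$ is a closed set of $M(R)$ if and only if $R^{*}(X)=X$.
   Context: For $x\in U$, $RN(x)=\{y\in U\mid xRy\}$; $R^{*}(X)=\{x\in U\mid RN(x)\cap X\neq\emptyset\}$. Let $\mathbf{S}(R)=\{X\subseteq U\mid R^{*}(X)=U\}$. The support matroid $M(R)=(U,\mathbf{I}(R))$ is the matroid on $U$ whose independent sets $\mathbf{I}(R)$ are the subsets of inclusion-minimal members of $\mathbf{S}(R)$. For a matroid $(U,\mathbf{I})$, the rank is $r(X)=\max\{|I|\mid I\subseteq X, I\in\mathbf{I}\}$, the closure is $cl(X)=\{e\in U\mid r(X)=r(X\cup\{e\})\}$, and $X$ is closed if $cl(X)=X$. *)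

(* Defs.v *)
From mathcomp Require Import all_boot.
Set Implicit Arguments. Unset Strict Implicit. Unset Printing Implicit Defensive.

Section SupportMatroid.
Variables (U : finType) (R : rel U).

Definition RN (x : U) : {set U} := [set y | R x y].

Definition Rupper (X : {set U}) : {set U} := [set x | RN x :&: X != set0].

Definition in_S (X : {set U}) : bool := Rupper X == [set: U].

Definition indep (I : {set U}) : bool :=
  [exists X : {set U}, minset in_S X && (I \subset X)].

Definition mrank (X : {set U}) : nat :=
  \max_(I : {set U} | (I \subset X) && indep I) #|I|.

Definition mclosure (X : {set U}) : {set U} :=
  [set e | mrank X == mrank (e |: X)].

Definition mclosed (X : {set U}) : bool := mclosure X == X.

End SupportMatroid.

(* Main.v *)
Require Import Defs.
From mathcomp Require Import all_boot.
Set Implicit Arguments. Unset Strict Implicit. Unset Printing Implicit Defensive.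

Section Proofs.
Variables (U : finType) (R : rel U).
Hypotheses (Hrefl : reflexive R) (Hsym : symmetric R) (Htrans : transitive R).

Definition pt (I : {set U}) := {in I &, forall x y, R x y -> x = y}.

Lemma RupperP (X : {set U}) x : reflect (exists2 y, y \in X & R x y) (x \in Rupper R X).
Proof.
rewrite inE; apply: (iffP (set0Pn _)).
  by case=> y; rewrite !inE => /andP[Rxy yX]; exists y.
by case=> y yX Rxy; exists y; rewrite !inE Rxy.
Qed.

Definition rep (x : U) := odflt x [pick y | R x y].

Lemma rep_R x : R x (rep x).
Proof. by rewrite /rep; case: pickP => //= _; rewrite Hrefl. Qed.

Lemma rep_eq x y : R x y -> rep x = rep y.
Proof.
move=> Rxy; rewrite /rep (@eq_pick _ (fun z => R x z) (fun z => R y z)).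
  by case: pickP => //= /(_ y); rewrite Hrefl.
  
move=> z /=; apply/idP/idP => H.
  by apply: Htrans H; rewrite Hsym.
exact: Htrans H.
Qed.

Lemma inS_min_pt (X : {set U}) : minset (in_S R) X -> pt X.
Proof.
move/minsetP=> [SX minX] x y xX yX Rxy.
apply/eqP; apply/negPn/negP => nxy.
have SY : in_S R (X :\ y).
  apply/eqP/setP => z; rewrite in_setT; apply/RupperP.
  have: z \in Rupper R X by rewrite (eqP SX) inE.
  case/RupperP => w wX Rzw.
  case: (eqVneq w y) => [ewy|nwy].
    exists x; first by rewrite !inE (negbTE nxy) xX.
    by apply: Htrans Rzw _; rewrite ewy Hsym.
  by exists w; rewrite // !inE nwy.
have := minX _ SY (subD1set X y).
by move/setP/(_ y); rewrite !inE eqxx yX.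
Qed.

Lemma indep_pt (I : {set U}) : indep R I <-> pt I.
Proof.
split.
  case/existsP=> X /andP[mX IX] x y xI yI.
  exact: (inS_min_pt mX) (subsetP IX x xI) (subsetP IX y yI).
move=> ptI; apply/existsP.
set X := I :|: [set rep x | x in ~: Rupper R I].
have ptX : pt X.
  have Hmix i x : i \in I -> x \notin Rupper R I -> R i (rep x) -> False.
    move=> iI xn Rir; move/negP: xn; apply; apply/RupperP; exists i => //.
    by apply: Htrans (rep_R x) _; rewrite Hsym.
  move=> a b; rewrite !inE => /orP[aI|/imsetP[x xn ->]] /orP[bI|/imsetP[y yn ->]].
  - exact: ptI.
  - by move=> R'; case: (Hmix a y aI _ R'); rewrite inE in yn.
  - by move=> R'; case: (Hmix b x bI _ _); rewrite 1?inE in xn; rewrite // Hsym.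
  - move=> Rr; apply: rep_eq; apply: Htrans (rep_R x) _.
    by apply: Htrans Rr _; rewrite Hsym rep_R.
have SX : in_S R X.
  apply/eqP/setP => z; rewrite in_setT; apply/RupperP.
  case: (boolP (z \in Rupper R I)) => [/RupperP[w wI Rzw]|zn].
    by exists w; rewrite // inE wI.
  by exists (rep z); [rewrite inE; apply/orP; right; apply/imsetP; exists z; rewrite // inE | exact: rep_R].
exists X; rewrite subsetUl andbT; apply/minsetP; split => // Y SY YX.
apply/eqP; rewrite eqEsubset YX /=; apply/subsetP => z zX.
have: z \in Rupper R Y by rewrite (eqP SY) inE.
case/RupperP => w wY Rzw.
by rewrite (ptX z w zX (subsetP YX w wY) Rzw).
Qed.

Lemma pt_sub (I J : {set U}) : I \subset J -> pt J -> pt I.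
Proof. by move=> IJ ptJ x y xI yI; apply: ptJ; apply: (subsetP IJ). Qed.

Lemma mrank_ge (X I : {set U}) : I \subset X -> pt I -> #|I| <= mrank R X.
Proof.
move=> IX ptI; rewrite /mrank.
by apply: (leq_bigmax_cond I); rewrite IX /=; apply/indep_pt.
Qed.

Lemma mrank_attained (X : {set U}) : exists2 I : {set U}, (I \subset X) /\ pt I & mrank R X = #|I|.
Proof.
have: #|[pred I : {set U} | (I \subset X) && indep R I]| > 0.
  apply/card_gt0P; exists set0; rewrite inE /= sub0set /=.
  by apply/indep_pt => x y; rewrite inE.
move/(eq_bigmax_cond (fun I : {set U} => #|I|)) => [I].
rewrite inE /= => /andP[IX /indep_pt ptI] E.
by exists I => //; rewrite /mrank -E.
Qed.

Lemma mrank_le (X Y : {set U}) : (forall I : {set U}, I \subset X -> pt I -> #|I| <= mrank R Y) ->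
  mrank R X <= mrank R Y.
Proof. by move=> H; have [I [IX ptI] ->] := mrank_attained X; apply: H. Qed.

Lemma closure_eq (X : {set U}) : mclosure R X = Rupper R X.
Proof.
apply/setP => e; rewrite inE.
case: (boolP (e \in Rupper R X)) => [/RupperP[x xX Rex] | en].
  rewrite eqn_leq; apply/andP; split.
    by apply: mrank_le => I IX ptI; apply: mrank_ge ptI; apply: subset_trans IX (subsetUr _ _).
  apply: mrank_le => I IX ptI.
  case: (boolP (e \in I)) => eI; last first.
    apply: mrank_ge ptI; apply/subsetP => z zI.
    by have := subsetP IX z zI => /setU1P[ze|//]; rewrite -ze zI in eI.
  case: (boolP (x \in I)) => xI.
    have exe := ptI e x eI xI Rex.
    apply: mrank_ge ptI; apply/subsetP => z zI.
    by have := subsetP IX z zI => /setU1P[->|//]; rewrite exe.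
  have <- : #|x |: (I :\ e)| = #|I|.
    by rewrite cardsU1 !inE (negbTE xI) andbF /= add1n (cardsD1 e I) eI.
  apply: mrank_ge.
    apply/subsetP => z; rewrite !inE => /orP[/eqP->//|/andP[nze zI]].
    by case/setU1P: (subsetP IX z zI) => // ze; rewrite ze eqxx in nze.
  move=> a b /setU1P[->|/setD1P[nae aI]] /setU1P[->|/setD1P[nbe bI]] //.
  - move=> Rxb; have Reb : R e b by apply: Htrans Rex Rxb.
    by move: (ptI e b eI bI Reb) nbe => ->; rewrite eqxx.
  - move=> Rax; have Rae : R a e by apply: Htrans Rax _; rewrite Hsym.
    by move: (ptI a e aI eI Rae) nae => ->; rewrite eqxx.
  - exact: ptI.
have [I [IX ptI] E] := mrank_attained X.
have eX : e \notin X by apply: contra en => eX; apply/RupperP; exists e.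
have eI : e \notin I by apply: contra eX; apply: (subsetP IX).
have : #|e |: I| <= mrank R (e |: X).
  apply: mrank_ge; first by apply: setUS.
  move=> a b; rewrite !inE => /orP[/eqP->|aI] /orP[/eqP->|bI] //.
  - move=> Reb; case/negP: en; apply/RupperP; exists b => //; exact: (subsetP IX).
  - move=> Rae; case/negP: en; apply/RupperP; exists a; first exact: (subsetP IX).
    by rewrite Hsym.
  - exact: ptI.
rewrite cardsU1 eI E add1n => lt; apply/negbTE; rewrite neq_ltn lt //.
Qed.

End Proofs.

Theorem corollary1 (U : finType) (R : rel U)
  (HU : 0 < #|U|)
  (Hrefl : reflexive R) (Hsym : symmetric R) (Htrans : transitive R) :
  forall X : {set U}, mclosed R X <-> Rupper R X = X.
Proof.
move=> X; rewrite /mclosed closure_eq //; split; by [move/eqP | move=> ->].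
Qed.
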